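(* For every $n\ge 1$, the map $\Lambda_{\mathrm{poset}}$ is a bijection from $\mathcal{P}_n$ to $\mathcal{T}_n$, and its inverse is $\Xi_{\mathrm{poset}}$. (In particular $\Lambda_{\mathrm{poset}}(\Xi_{\mathrm{poset}}(T))=T$ for every $T\in\mathcal{T}_n$.)
   Context: For a finite set $S=\{x_1<\dots<x_n\}\subset\mathbb{R}$, define the partial order $\preceq_S$ on $[n]=\{1,\dots,n\}$ by $i\prec_S j$ iff $x_i+1<x_j$. A finite poset is a unit interval poset if it is isomorphic to $([n],\preceq_S)$ for some such $S$ (called a starting set). $\mathcal{P}_n$ denotes the set of unit interval posets with $n$ elements, up to isomorphism. A plane tree is either a single node, or a root node joined to a finite ordered (left-to-right) sequence of plane trees whose roots are its children; $\mathcal{T}_n$ is the set of plane trees with $n$ non-root nodes. The depth $d(u)$ of a node is its distance to the root. Map $\Lambda_{\mathrm{poset}}$: given $P=([n],\preceq_S)$ with $S=\{x_1<\dots<x_n\}$, set $x_0=x_1-2$ and build a tree with nodes $v_0,\dots,v_n$, root $v_0$, where for $i\in[n]$ the parent of $v_i$ is $v_j$ with $j\in\{0,\dots,n\}$ the largest index such that $x_j+1<x_i$; children of the same node are ordered left to right by decreasing index. This tree depends only on $\preceq_S$, and $\Lambda_{\mathrm{poset}}(P)$ is this tree. Map $\Xi_{\mathrm{poset}}$: given $T\in\mathcal{T}_n$, let $m$ be the maximal number of children of a node of $T$; for a non-root node $u$ let $c(u)=i$ if $u$ is the $i$-th child of its parent counted from right to left; with $u_0=\text{root},u_1,\dots,u_{d(u)}=u$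 the root-to-$u$ path, set $x_u=d(u)+\sum_{i=1}^{d(u)}c(u_i)(m+2)^{-i}$. With $S=\{x_u: u \text{ non-root}\}$ (an $n$-element set), $\Xi_{\mathrm{poset}}(T)=([n],\preceq_S)$. *)

(* Defs.v *)
From HB Require Import structures.
From mathcomp Require Import all_boot all_order all_algebra.
From mathcomp Require Import reals.
Set Implicit Arguments. Unset Strict Implicit. Unset Printing Implicit Defensive.
Import Order.TTheory GRing.Theory Num.Theory.

Inductive ptree := Node of seq ptree.

Fixpoint ptsize (t : ptree) : nat :=
  let: Node ts := t in sumn [seq (ptsize u).+1 | u <- ts].

Fixpoint maxdeg (t : ptree) : nat :=
  let: Node ts := t in maxn (size ts) (foldr maxn 0%N [seq maxdeg u | u <- ts]).

Section UIP.
Variable R : realFieldType.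
Local Open Scope ring_scope.

(* A starting set S = {x_1 < ... < x_n} is represented by the strictly
   increasing list s = [:: x_1; ...; x_n]. *)
Definition starting (n : nat) (s : seq R) : Prop :=
  size s = n /\ sorted <%R s.

(* the order <=_S on [n] (element i+1 of [n] is index i : 'I_n) *)
Definition uip_le (s : seq R) (i j : nat) : bool :=
  (i == j) || (nth 0 s i + 1 < nth 0 s j).

Definition uip_iso (n : nat) (s s' : seq R) : Prop :=
  exists f : 'I_n -> 'I_n, bijective f /\
    forall i j : 'I_n, uip_le s i j = uip_le s' (f i) (f j).

Definition xs (s : seq R) (i : nat) : R :=
  if i is i'.+1 then nth 0 s i' else head 0 s - 2.

Definition parent (s : seq R) (i : nat) : nat :=
  (\max_(j < (size s).+1 | (xs s j + 1 < xs s i)%R) (j : nat))%N.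

(* subtree rooted at v_j; children ordered left to right by decreasing index.
   [fuel] bounds the depth (size s + 1 suffices, as parent i < i). *)
Fixpoint build (s : seq R) (fuel j : nat) : ptree :=
  if fuel is f.+1 then
    Node [seq build s f i | i <- rev [seq i <- iota 1 (size s) | parent s i == j]]
  else Node [::].

Definition Lambda (s : seq R) : ptree := build s (size s).+1 0.

(* values x_u of all non-root nodes of the subtree t, whose root is at
   depth d and has partial sum acc = sum_{i<=d} c(u_i) (m+2)^{-i} *)
Fixpoint xi_vals (m : R) (d : nat) (acc : R) (t : ptree) : seq R :=
  let: Node ts := t in
  let k := size ts in
  (fix aux (l : seq ptree) (j : nat) : seq R :=
     match l with
     | [::] => [::]
     | u :: l' =>
       (* u is the (j+1)-th child from the left, i.e. the (k-j)-th from the right *)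
       let acc' := acc + (k - j)%:R * (m + 2) ^- d.+1 in
       ((d.+1)%:R + acc') :: xi_vals m d.+1 acc' u ++ aux l' j.+1
     end) ts 0%N.

Definition Xi (T : ptree) : seq R :=
  sort <=%R (xi_vals (maxdeg T)%:R 0 0 T).

End UIP.

(* Main.v *)
Require Import Defs.
From mathcomp Require Import all_boot all_order all_algebra.
From mathcomp Require Import reals.
From mathcomp Require Import ring lra zify.
Set Implicit Arguments. Unset Strict Implicit. Unset Printing Implicit Defensive.
Import Order.TTheory GRing.Theory Num.Theory.


Section Part1.
Variable R : realFieldType.
Local Open Scope ring_scope.

Lemma nth_ltS (s : seq R) i j : sorted <%R s -> (i < j)%N -> (j < size s)%N ->
  nth 0 s i < nth 0 s j.
Proof.
move=> ss ij js; apply: (sorted_ltn_nth lt_trans) => //; exact: ltn_trans ij js.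
Qed.

Lemma nth_leS (s : seq R) i j : sorted <%R s -> (i <= j)%N -> (j < size s)%N ->
  nth 0 s i <= nth 0 s j.
Proof.
move=> ss; rewrite leq_eqVlt => /orP[/eqP->//|ij] js.
by apply/ltW/nth_ltS.
Qed.

Definition Pr (s : seq R) i j := xs s j + 1 < xs s i.

Lemma Pr0 (s : seq R) i : sorted <%R s -> (0 < i <= size s)%N -> Pr s i 0.
Proof.
move=> ss /andP[i0 iN]; rewrite /Pr /=.
case: i i0 iN => // i _ iN /=.
have : head 0 s <= nth 0 s i.
  rewrite -nth0; apply: nth_leS => //.
lra.
Qed.

Lemma Pr_lt (s : seq R) i j : sorted <%R s -> (0 < i <= size s)%N -> (j <= size s)%N ->
  Pr s i j -> (j < i)%N.
Proof.
move=> ss /andP[i0 iN] jN; rewrite /Pr.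
case: (ltnP j i) => // ij.
case: j ij jN => [|j]; first by rewrite leqn0 => /eqP ie; move: i0; rewrite ie.
case: i i0 iN => // i _ iN ij jN /=.
have : nth 0 s i <= nth 0 s j by apply: nth_leS.
lra.
Qed.

Lemma Pr_down (s : seq R) i j j' : sorted <%R s -> (j' <= j)%N -> (j <= size s)%N ->
  Pr s i j -> Pr s i j'.
Proof.
move=> ss jj jN; rewrite /Pr.
case: j' jj => [|j'] jj.
  case: j jj jN => [//|j] _ jN /=.
  have : head 0 s <= nth 0 s j by rewrite -nth0; apply: nth_leS.
  lra.
case: j jj jN => [//|j] jj jN /=.
have : nth 0 s j' <= nth 0 s j by apply: nth_leS.
lra.
Qed.

Lemma Pr_up (s : seq R) i i' j : sorted <%R s -> (i <= i')%N -> (0 < i)%N -> (i' <= size s)%N ->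
  Pr s i j -> Pr s i' j.
Proof.
move=> ss ii i0 iN; rewrite /Pr.
case: i ii i0 => [//|i] ii _.
case: i' ii iN => [//|i'] ii iN /=.
have : nth 0 s i <= nth 0 s i' by apply: nth_leS.
lra.
Qed.

Lemma bigmax_attain (N : nat) (P : nat -> bool) : P 0%N ->
  exists2 j : 'I_N.+1, P j & (\max_(j < N.+1 | P j) j)%N = j.
Proof.
move=> P0.
have [j0 Pj0 e] := @eq_bigmax_cond _ [pred j : 'I_N.+1 | P j] (fun j => val j)
   (ltac:(apply/card_gt0P; by exists ord0)).
by exists j0.
Qed.

Lemma parent_spec (s : seq R) i : sorted <%R s -> (0 < i <= size s)%N ->
  [/\ Pr s i (parent s i), (parent s i < i)%N &
      forall j, (j <= size s)%N -> Pr s i j -> (j <= parent s i)%N].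
Proof.
move=> ss iN.
have [j0 Pj0 e] := @bigmax_attain (size s) (Pr s i) (Pr0 ss iN).
rewrite /parent e.
split => //.
- by apply: (Pr_lt ss iN) => //; exact: (ltn_ord j0).
- move=> j jN Pj.
  have := @leq_bigmax_cond _ (fun j : 'I_(size s).+1 => Pr s i j) (fun j => val j)
      (Ordinal (jN : (j < (size s).+1)%N)) Pj.
  by rewrite e.
Qed.

Lemma parent_mono (s : seq R) i i' : sorted <%R s -> (0 < i)%N -> (i <= i')%N ->
  (i' <= size s)%N -> (parent s i <= parent s i')%N.
Proof.
move=> ss i0 ii iN.
have iN' : (0 < i <= size s)%N by rewrite i0 (leq_trans ii iN).
have i'N : (0 < i' <= size s)%N by rewrite (leq_trans i0 ii) iN.
have [P1 L1 M1] := parent_spec ss iN'.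
have [P2 L2 M2] := parent_spec ss i'N.
apply: M2; first by lia.
exact: Pr_up P1.
Qed.

Lemma Lchar (s : seq R) a b : sorted <%R s -> (a < size s)%N -> (b < size s)%N ->
  (nth 0 s a + 1 < nth 0 s b) = (a.+1 <= parent s b.+1)%N.
Proof.
move=> ss aN bN.
have bN' : (0 < b.+1 <= size s)%N by rewrite bN.
have [P1 L1 M1] := parent_spec ss bN'.
apply/idP/idP => H.
  by apply: M1 => //.
have : Pr s b.+1 a.+1 by apply: (Pr_down ss H) => //; lia.
by [].
Qed.

Lemma uip_le_char (s : seq R) a b : sorted <%R s -> (a < size s)%N -> (b < size s)%N ->
  uip_le s a b = (a == b) || (a.+1 <= parent s b.+1)%N.
Proof. by move=> ss aN bN; rewrite /uip_le Lchar. Qed.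

Lemma iso_of_parent n (s s' : seq R) : starting n s -> starting n s' ->
  (forall i, (0 < i <= n)%N -> parent s i = parent s' i) -> uip_iso n s s'.
Proof.
move=> [sz ss] [sz' ss'] E; exists id; split; first by exists id.
move=> i j; rewrite !uip_le_char // ?sz ?sz' //.
by rewrite E // ltn_ord.
Qed.

Lemma build_ext (s s' : seq R) : size s = size s' ->
  (forall i, (0 < i <= size s)%N -> parent s i = parent s' i) ->
  forall f j, build s f j = build s' f j.
Proof.
move=> sz E; elim=> [//|f IH] j /=.
rewrite -sz; congr Node.
rewrite (@eq_in_filter _ _ (fun i => parent s' i == j)); last first.
  by move=> i; rewrite mem_iota => /andP[i1 i2]; rewrite E //; apply/andP; split; lia.
by apply: eq_map => i; rewrite IH.
Qed.

Lemma parent_ext n (s s' : seq R) : starting n s -> starting n s' ->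
  (forall a b, (a < n)%N -> (b < n)%N ->
     (nth 0 s a + 1 < nth 0 s b) = (nth 0 s' a + 1 < nth 0 s' b)) ->
  forall i, (0 < i <= n)%N -> parent s i = parent s' i.
Proof.
move=> [sz ss] [sz' ss'] E i /andP[i0 iN].
rewrite /parent sz sz'; apply: eq_bigl => j.
case: j => [[|j] jN] /=.
  have h1 := @Pr0 s i ss; have h2 := @Pr0 s' i ss'.
  rewrite /Pr /= in h1 h2.
  by rewrite h1 ?h2 ?sz ?sz' ?i0 ?iN.
case: i i0 iN => // i _ iN /=.
by apply: E; lia.
Qed.

End Part1.

Section PartB.
Variable R : realFieldType.
Variable n : nat.
Local Open Scope ring_scope.

Definition Lr (s : seq R) (a b : nat) := nth 0 s a + 1 < nth 0 s b.
Definition Down (s : seq R) (b : nat) : {set 'I_n} := [set a : 'I_n | Lr s a b].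
Definition Up (s : seq R) (a : nat) : {set 'I_n} := [set b : 'I_n | Lr s a b].
Definition rk (s : seq R) (a : nat) : nat := (#|Down s a| + (n - #|Up s a|))%N.

Lemma sub_down (s : seq R) a b : starting n s -> (a <= b)%N -> (b < n)%N ->
  Down s a \subset Down s b.
Proof.
move=> [sz ss] ab bn; apply/subsetP => x; rewrite !inE /Lr.
have : nth 0 s a <= nth 0 s b by apply: nth_leS; rewrite // sz.
lra.
Qed.

Lemma sub_up (s : seq R) a b : starting n s -> (a <= b)%N -> (b < n)%N ->
  Up s b \subset Up s a.
Proof.
move=> [sz ss] ab bn; apply/subsetP => x; rewrite !inE /Lr.
have : nth 0 s a <= nth 0 s b by apply: nth_leS; rewrite // sz.
lra.
Qed.

Lemma card_le_n (A : {set 'I_n}) : (#|A| <= n)%N.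
Proof. by have := max_card (mem A); rewrite card_ord. Qed.

Lemma rk_mono (s : seq R) a b : starting n s -> (a <= b)%N -> (b < n)%N ->
  (rk s a <= rk s b)%N.
Proof.
move=> st ab bn; rewrite /rk.
have h1 := subset_leq_card (sub_down st ab bn).
have h2 := subset_leq_card (sub_up st ab bn).
have h3 := card_le_n (Up s a).
have h4 := card_le_n (Up s b).
lia.
Qed.

Lemma twins (s : seq R) a b : starting n s -> (a < n)%N -> (b < n)%N ->
  rk s a = rk s b -> Down s a = Down s b /\ Up s a = Up s b.
Proof.
wlog ab : a b / (a <= b)%N.
  move=> W st an bn e; case: (leqP a b) => h; first exact: W.
  by have [-> ->] := W b a (ltnW h) st bn an (esym e).
move=> st an bn e.
have s1 := sub_down st ab bn; have s2 := sub_up st ab bn.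
have h1 := subset_leq_card s1; have h2 := subset_leq_card s2.
have h3 := card_le_n (Up s a); have h4 := card_le_n (Up s b).
move: e; rewrite /rk => e.
have e1 : #|Down s a| = #|Down s b| by lia.
have e2 : #|Up s a| = #|Up s b| by lia.
split; apply/eqP.
  by rewrite eqEcard s1 e1 leqnn.
by rewrite eq_sym eqEcard s2 e2 leqnn.
Qed.

Lemma iso_Lr (s s' : seq R) (f : 'I_n -> 'I_n) : starting n s -> starting n s' ->
  bijective f -> (forall i j : 'I_n, uip_le s i j = uip_le s' (f i) (f j)) ->
  forall a b : 'I_n, Lr s a b = Lr s' (f a) (f b).
Proof.
move=> _ _ fb E a b.
have finj := bij_inj fb.
have := E a b; rewrite /uip_le /Lr.
case: (eqVneq a b) => [->|ne].
  have H (x : R) : (x + 1 < x) = false by apply/negbTE; rewrite -leNgt lerDl.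
  by rewrite !H.
have ne' : (f a != f b) by apply: contra ne => /eqP /finj ->.
have ne1 : (nat_of_ord a == nat_of_ord b) = false by apply/negbTE.
have ne2 : (nat_of_ord (f a) == nat_of_ord (f b)) = false by apply/negbTE.
by rewrite ne1 ne2.
Qed.

Lemma rk_f (s s' : seq R) (f : 'I_n -> 'I_n) : starting n s -> starting n s' ->
  bijective f -> (forall i j : 'I_n, uip_le s i j = uip_le s' (f i) (f j)) ->
  forall a : 'I_n, rk s a = rk s' (f a).
Proof.
move=> st st' fb E a.
have finj := bij_inj fb.
have L := iso_Lr st st' fb E.
have ed : Down s a = f @^-1: Down s' (f a).
  by apply/setP => x; rewrite !inE L.
have eu : Up s a = f @^-1: Up s' (f a).
  by apply/setP => x; rewrite !inE L.
by rewrite /rk ed eu !card_preimset.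
Qed.

Lemma rk_eq (s s' : seq R) : starting n s -> starting n s' -> uip_iso n s s' ->
  forall a, (a < n)%N -> rk s a = rk s' a.
Proof.
move=> st st' [f [fb E]].
have finj := bij_inj fb.
have so (t : seq R) : starting n t -> sorted leq [seq rk t i | i <- iota 0 n].
  move=> stt; apply: (@homo_sorted_in _ _ [pred x | (x < n)%N]); last exact: iota_sorted.
    by move=> x y _; rewrite inE => yn xy; apply: rk_mono.
  by apply/allP => x; rewrite mem_iota.
have pe : perm_eq [seq rk s i | i <- iota 0 n] [seq rk s' i | i <- iota 0 n].
  have e1 : [seq rk s i | i <- iota 0 n] = [seq rk s' (val i) | i <- [seq f i | i <- enum 'I_n]].
    rewrite -val_enum_ord -!map_comp; apply: eq_map => a /=; exact: (rk_f st st' fb E).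
  have e2 : [seq rk s' i | i <- iota 0 n] = [seq rk s' (val i) | i <- enum 'I_n].
    by rewrite -val_enum_ord -!map_comp.
  rewrite e1 e2.
  apply: perm_map.
  apply: uniq_perm; first by rewrite map_inj_uniq ?enum_uniq.
    exact: enum_uniq.
  move=> x; rewrite mem_enum inE.
  apply/mapP; have [g fg gf] := fb; exists (g x); first by rewrite mem_enum.
  by rewrite gf.
have := sorted_eq leq_trans anti_leq (so s st) (so s' st') pe.
move=> e a an.
have := congr1 (fun l => nth 0%N l a) e.
by rewrite !(nth_map 0%N) ?size_iota // nth_iota.
Qed.

Lemma iso_L (s s' : seq R) : starting n s -> starting n s' -> uip_iso n s s' ->
  forall a b, (a < n)%N -> (b < n)%N ->
  (nth 0 s a + 1 < nth 0 s b) = (nth 0 s' a + 1 < nth 0 s' b).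
Proof.
move=> st st' iso; have [f [fb E]] := iso.
have re := rk_eq st st' iso.
have rf := rk_f st st' fb E.
have L := iso_Lr st st' fb E.
move=> a b an bn.
pose a' := Ordinal an; pose b' := Ordinal bn.
have ta : rk s' (f a') = rk s' a' by rewrite -rf re.
have tb : rk s' (f b') = rk s' b' by rewrite -rf re.
have [Da Ua] := twins st' (ltn_ord _) an ta.
have [Db Ub] := twins st' (ltn_ord _) bn tb.
change (Lr s a' b' = Lr s' a' b').
rewrite L.
have -> : Lr s' (f a') (f b') = (f b' \in Up s' (f a')) by rewrite inE.
rewrite Ua inE.
have -> : Lr s' a' (f b') = (a' \in Down s' (f b')) by rewrite inE.
by rewrite Db inE.
Qed.

End PartB.


Fixpoint pforall (P : ptree -> Prop) (ts : seq ptree) : Prop :=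
  if ts is t :: ts' then P t /\ pforall P ts' else True.

Fixpoint ptree_ind' (P : ptree -> Prop) (H : forall ts, pforall P ts -> P (Node ts))
  (t : ptree) : P t :=
  match t with
  | Node ts => H ts ((fix aux (l : seq ptree) : pforall P l :=
       match l with [::] => I | u :: l' => conj (ptree_ind' H u) (aux l') end) ts)
  end.

Lemma pforall_nth P ts i : pforall P ts -> (i < size ts)%N -> P (nth (Node [::]) ts i).
Proof. elim: ts i => [//|t ts IH] [|i] /= [Ht Hts] //; rewrite ltnS; exact: IH. Qed.

Fixpoint auxF (f : ptree -> seq (seq nat)) (k : nat) (l : seq ptree) (j : nat) : seq (seq nat) :=
  if l is u :: l' then ([:: (k - j)%N] :: map (cons (k - j)%N) (f u)) ++ auxF f k l' j.+1
  else [::].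

Fixpoint addr (t : ptree) : seq (seq nat) :=
  let: Node ts := t in auxF addr (size ts) ts 0.

Definition children (t : ptree) := let: Node ts := t in ts.
Definition deg t := size (children t).

Lemma mem_auxF f k l j (c : nat) (a : seq nat) :
  (c :: a \in auxF f k l j) <->
  exists2 i, (i < size l)%N & (c = k - (j + i))%N /\ (a = [::] \/ a \in f (nth (Node [::]) l i)).
Proof.
elim: l j => [|u l IH] j /=.
  by split => // [[]].
rewrite inE mem_cat; split.
  case/orP => [/eqP[-> ->]|/orP[/mapP[b bin [-> ->]]|]].
  - by exists 0%N; rewrite // addn0; split => //; left.
  - by exists 0%N; rewrite // addn0; split => //; right.
  move=> H; have [i il [-> h]] := proj1 (IH j.+1) H; exists i.+1 => //; split => //; by rewrite addSnnS.
case=> [[|i]] il [ec h].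
  rewrite ec addn0; case: h => [->|ain]; first by rewrite eqxx.
  by apply/orP; right; apply/orP; left; apply/mapP; exists a.
apply/orP; right; apply/orP; right.
apply: (proj2 (IH j.+1)); exists i => //; split => //; by rewrite ec addSnnS.
Qed.

Lemma nil_notin_auxF f k l j : [::] \notin auxF f k l j.
Proof.
elim: l j => [//|u l IH] j /=; rewrite inE mem_cat !negb_or IH andbT /=.
by apply/mapP => -[b _].
Qed.

Lemma nil_notin_addr t : [::] \notin addr t.
Proof. by case: t => ts; exact: nil_notin_auxF. Qed.

Lemma mem_addr_cons ts (c : nat) (a : seq nat) :
  (c :: a \in addr (Node ts)) <->
  (0 < c <= size ts)%N /\ (a = [::] \/ a \in addr (nth (Node [::]) ts (size ts - c))).
Proof.
have -> : (c :: a \in addr (Node ts)) = (c :: a \in auxF addr (size ts) ts 0) by [].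
split.
  move/mem_auxF => [i il [-> h]]; split; first by lia.
  by have -> : (size ts - (size ts - (0 + i)) = i)%N by lia.
move=> [cb h]; apply/mem_auxF; exists (size ts - c)%N; first by lia.
split; first by lia.
by [].
Qed.

Lemma uniq_auxF K l j : pforall (fun t => uniq (addr t)) l -> (j + size l <= K)%N ->
  uniq (auxF addr K l j).
Proof.
elim: l j => [//|u l IHl] j [Hu Hl] jl /=.
rewrite mem_cat negb_or cat_uniq.
have jK : (j < K)%N by move: jl => /=; lia.
apply/andP; split; first (apply/andP; split).
- apply/mapP => -[[|c b] bin e]; last by case: e.
  by rewrite (negbTE (nil_notin_addr u)) in bin.
- apply/negP => /mem_auxF [i il [ec _]]; move: jl => /=; lia.
apply/and3P; split.
- by rewrite (map_inj_uniq (fun x y => @congr1 _ _ behead (_ :: x) (_ :: y))).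
- apply/hasP => -[x xin].
  case: x xin => [|c a]; first by rewrite (negbTE (nil_notin_auxF _ _ _ _)).
  move/mem_auxF => [i il [ec _]].
  move=> /mapP[b _ [e1 _]]; move: jl => /=; lia.
by apply: IHl => //; move: jl => /=; lia.
Qed.

Lemma uniq_addr t : uniq (addr t).
Proof. by elim/ptree_ind': t => ts IH; apply: uniq_auxF. Qed.

Lemma size_auxF K l j : pforall (fun t => size (addr t) = ptsize t) l ->
  size (auxF addr K l j) = sumn [seq (ptsize u).+1 | u <- l].
Proof.
elim: l j => [//|u l IHl] j [Hu Hl] /=.
by rewrite size_cat /= size_map Hu IHl.
Qed.

Lemma size_addr t : size (addr t) = ptsize t.
Proof. by elim/ptree_ind': t => ts IH; apply: size_auxF. Qed.

Arguments addr : simpl never.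

Fixpoint subT (t : ptree) (a : seq nat) : ptree :=
  if a is c :: a' then subT (nth (Node [::]) (children t) (deg t - c)) a' else t.

Lemma subT_rcons t a c :
  subT t (rcons a c) = nth (Node [::]) (children (subT t a)) (deg (subT t a) - c).
Proof. by elim: a t => [//|c0 a IH] t /=. Qed.

Lemma mem_addr_rcons t (u : seq nat) (c : nat) :
  (rcons u c \in addr t) <-> (u = [::] \/ u \in addr t) /\ (0 < c <= deg (subT t u))%N.
Proof.
elim: u t => [|c0 u IH] [ts] /=.
  rewrite -[[:: c]]/(c :: [::]); split.
    by move/mem_addr_cons => [h _]; split => //; left.
  by move=> [_ h]; apply/mem_addr_cons; split => //; left.
split.
  move/mem_addr_cons => [h1 [|]].
    by move/eqP; rewrite -size_eq0 size_rcons.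
  move/IH => [h2 h3]; split => //; right; apply/mem_addr_cons; split => //.
move=> [[//|/mem_addr_cons [h1 h2]] h3].
apply/mem_addr_cons; split => //; right; apply/IH; split => //.
Qed.

Lemma foldr_maxn_ge (s : seq nat) x : x \in s -> (x <= foldr maxn 0 s)%N.
Proof.
elim: s => [//|y s IH] /=; rewrite inE => /orP[/eqP->|/IH h]; first exact: leq_maxl.
exact: leq_trans h (leq_maxr _ _).
Qed.

Lemma maxdeg_nth ts i : (maxdeg (nth (Node [::]) ts i) <= maxdeg (Node ts))%N.
Proof.
case: (ltnP i (size ts)) => h; last by rewrite nth_default.
rewrite /= (leq_trans _ (leq_maxr _ _)) //; apply: foldr_maxn_ge.
by rewrite -(nth_map (Node [::]) 0%N) // mem_nth // size_map.
Qed.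

Lemma deg_subT_le t u : (deg (subT t u) <= maxdeg t)%N.
Proof.
elim: u t => [|c u IH] [ts] /=; first exact: leq_maxl.
exact: leq_trans (IH _) (maxdeg_nth _ _).
Qed.

Lemma addr_digits t a : a \in addr t -> all (fun c => 0 < c <= maxdeg t)%N a.
Proof.
elim/last_ind: a => [//|u c IH] /mem_addr_rcons [h1 /andP[c0 c1]].
rewrite all_rcons c0 (leq_trans c1 (deg_subT_le _ _)) /=.
by case: h1 => [->//|/IH].
Qed.

Fixpoint height (t : ptree) : nat :=
  let: Node ts := t in foldr maxn 0 [seq (height u).+1 | u <- ts].

Lemma height_nth ts i : (i < size ts)%N -> (height (nth (Node [::]) ts i) < height (Node ts))%N.
Proof.
move=> h /=; apply: foldr_maxn_ge.
by rewrite -(nth_map (Node [::]) 0%N (fun u => (height u).+1)) // mem_nth // size_map.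
Qed.

Lemma height_le_size t : (height t <= ptsize t)%N.
Proof.
elim/ptree_ind': t => ts /=; elim: ts => [//|u l IH] /= [Hu Hl].
rewrite geq_max; apply/andP; split; first by rewrite ltnS (leq_trans Hu) // leq_addr.
exact: leq_trans (IH Hl) (leq_addl _ _).
Qed.


Section Analytic.
Variable R : realFieldType.
Variable m : nat.
Local Open Scope ring_scope.

Definition bb : R := m%:R + 2.
Definition F (a : seq nat) : R := \sum_(i < size a) (nth 0%N a i)%:R / bb ^+ i.+1.
Definition vv (a : seq nat) : R := (size a)%:R + F a.
Definition good (a : seq nat) := all (fun c => 0 < c <= m)%N a.

Lemma bb_gt1 : 1 < bb.
Proof. rewrite /bb; have : (0 : R) <= m%:R by apply: ler0n. lra. Qed.
Lemma bb_gt0 : 0 < bb.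
Proof. have := bb_gt1; lra. Qed.
Lemma bbX_gt0 k : 0 < bb ^+ k.
Proof. exact: exprn_gt0 bb_gt0. Qed.
Lemma invX_gt0 k : 0 < 1 / bb ^+ k.
Proof. by rewrite divr_gt0 // bbX_gt0. Qed.

Lemma invX_S k : 1 / bb ^+ k = bb * (1 / bb ^+ k.+1).
Proof.
have h1 := bb_gt0; have h2 := bbX_gt0 k.
rewrite exprS; field.
by apply/andP; split; rewrite gt_eqF.
Qed.

Lemma F_nil : F [::] = 0.
Proof. by rewrite /F big_ord0. Qed.

Lemma F_rcons a c : F (rcons a c) = F a + c%:R * (1 / bb ^+ (size a).+1).
Proof.
rewrite /F size_rcons big_ord_recr /= nth_rcons ltnn eqxx mul1r.
congr (_ + _).
by apply: eq_bigr => i _; rewrite nth_rcons ltn_ord.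
Qed.

Lemma F_cons c a : F (c :: a) = (c%:R + F a) / bb.
Proof.
rewrite /F /= big_ord_recl /= expr1 mulrDl; congr (_ + _).
rewrite big_distrl /=; apply: eq_bigr => i _.
rewrite /bump /= add1n exprS; have h1 := bb_gt0; have h2 := bbX_gt0 i.+1.
field; by apply/andP; split; rewrite gt_eqF.
Qed.

Lemma F_ge0 a : 0 <= F a.
Proof.
rewrite /F; apply: sumr_ge0 => i _; apply: divr_ge0; first exact: ler0n.
exact: ltW (bbX_gt0 _).
Qed.

Lemma good_rcons a c : good (rcons a c) = good a && (0 < c <= m)%N.
Proof. by rewrite /good all_rcons andbC. Qed.

Lemma F_bound a : good a -> F a <= 1 - 1 / bb ^+ (size a).
Proof.
elim/last_ind: a => [|a c IH]; first by rewrite F_nil expr0 divr1 subrr.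
rewrite good_rcons => /andP[ga /andP[c0 cm]].
rewrite F_rcons size_rcons.
have := IH ga; rewrite invX_S.
have ecm : c%:R * (1 / bb ^+ (size a).+1) <= m%:R * (1 / bb ^+ (size a).+1).
  by rewrite ler_pM2r ?invX_gt0 // ler_nat.
have := invX_gt0 (size a).+1.
rewrite /bb in ecm *.
set e := 1 / _ in ecm *.
move=> ep; rewrite mulrDl.
lra.
Qed.

Lemma F_lt1 a : good a -> F a < 1.
Proof. move=> ga; have := F_bound ga; have := invX_gt0 (size a); lra. Qed.

Lemma val_ge a : (size a)%:R <= vv a.
Proof. rewrite /vv; have := F_ge0 a; lra. Qed.

Lemma val_lt a : good a -> vv a < (size a)%:R + 1.
Proof. move=> ga; rewrite /vv; have := F_lt1 ga; lra. Qed.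

Lemma lemul_e (x y e : R) : x <= y -> 0 < e -> x * e <= y * e.
Proof. by move=> xy ep; rewrite ler_pM2r. Qed.

Lemma gap a a' : good a -> good a' -> size a = size a' -> a != a' ->
  F a + 1 / bb ^+ (size a) <= F a' \/ F a' + 1 / bb ^+ (size a) <= F a.
Proof.
elim/last_ind: a a' => [|u c IH] a'.
  by case: a' => // _ _ _; rewrite eqxx.
case/lastP: a' => [|u' c']; first by rewrite size_rcons.
rewrite !good_rcons !size_rcons => /andP[gu /andP[c0 cm]] /andP[gu' /andP[c0' cm']] [su] ne.
rewrite !F_rcons su.
have ep := invX_gt0 (size u').+1.
set e := 1 / bb ^+ (size u').+1 in ep *.
have hb := bb_gt1.
case: (eqVneq u u') => [eu|neu].
  subst u'.
  have nc : c != c' by apply: contra ne => /eqP ->.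
  case: (ltngtP c c') => [h|h|h]; last by rewrite h eqxx in nc.
    left; have : (c.+1)%:R * e <= c'%:R * e by apply: lemul_e; rewrite // ler_nat.
    rewrite -addn1 natrD mulrDl mul1r; lra.
  right; have : (c'.+1)%:R * e <= c%:R * e by apply: lemul_e; rewrite // ler_nat.
  rewrite -addn1 natrD mulrDl mul1r; lra.
have := IH u' gu gu' su neu; rewrite su invX_S -/e.
have hc : c%:R * e + 1 * e <= bb * e + c'%:R * e.
  rewrite -!mulrDl; apply: lemul_e => //; rewrite /bb.
  have : (c%:R : R) <= m%:R by rewrite ler_nat.
  have : (0 : R) <= c'%:R by apply: ler0n.
  lra.
have hc' : c'%:R * e + 1 * e <= bb * e + c%:R * e.
  rewrite -!mulrDl; apply: lemul_e => //; rewrite /bb.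
  have : (c'%:R : R) <= m%:R by rewrite ler_nat.
  have : (0 : R) <= c%:R by apply: ler0n.
  lra.
rewrite !mul1r in hc hc'.
case=> h; [left|right]; lra.
Qed.

Lemma vv_inj a a' : good a -> good a' -> vv a = vv a' -> a = a'.
Proof.
move=> ga ga' e.
have h1 := val_ge a; have h2 := val_lt ga.
have h3 := val_ge a'; have h4 := val_lt ga'.
have sz : size a = size a'.
  case: (ltngtP (size a) (size a')) => // h; exfalso.
    have : ((size a + 1)%N%:R : R) <= (size a')%:R by rewrite ler_nat addn1.
    rewrite natrD; lra.
  have : ((size a' + 1)%N%:R : R) <= (size a)%:R by rewrite ler_nat addn1.
  rewrite natrD; lra.
case: (eqVneq a a') => // ne.
have := gap ga ga' sz ne; have := invX_gt0 (size a).
move: e; rewrite /vv sz => e ep.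
case=> h; exfalso; lra.
Qed.

Lemma val_lt_size a a' : good a -> (size a < size a')%N -> vv a < vv a'.
Proof.
move=> ga h; have h2 := val_lt ga; have h3 := val_ge a'.
have : ((size a + 1)%N%:R : R) <= (size a')%:R by rewrite ler_nat addn1.
rewrite natrD; lra.
Qed.

Lemma val_rcons u c : vv (rcons u c) = vv u + 1 + c%:R * (1 / bb ^+ (size u).+1).
Proof. by rewrite /vv F_rcons size_rcons -addn1 natrD; lra. Qed.

Lemma val_parent u c : (0 < c)%N -> vv u + 1 < vv (rcons u c).
Proof.
move=> c0; rewrite val_rcons.
have : 0 < c%:R * (1 / bb ^+ (size u).+1) by rewrite mulr_gt0 ?invX_gt0 ?ltr0n.
lra.
Qed.

Lemma Kval u c w : good (rcons u c) -> good w -> w != [::] ->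
  vv w + 1 < vv (rcons u c) -> w = u \/ vv w < vv u.
Proof.
rewrite good_rcons => /andP[gu /andP[c0 cm]] gw wn.
have hv' : vv (rcons u c) < (size u).+1%:R + 1.
  by rewrite -(size_rcons u c); apply: val_lt; rewrite good_rcons gu c0 cm.
case: (ltngtP (size w) (size u)) => h.
- by right; apply: val_lt_size.
- have h1 := val_ge w.
  have : ((size u + 1)%N%:R : R) <= (size w)%:R by rewrite ler_nat addn1.
  move: hv'; rewrite -(addn1 (size u)) !natrD => ? ? ?; exfalso; lra.
case: (eqVneq w u) => [->|ne]; first by left.
move=> H; right.
have := gap gw gu h ne.
move: H; rewrite val_rcons /vv h (invX_S (size u)).
have ep := invX_gt0 (size u).+1.
set e := 1 / bb ^+ (size u).+1 in ep *.
have hc : c%:R * e < bb * e.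
  rewrite ltr_pM2r // /bb.
  have : (c%:R : R) <= m%:R by rewrite ler_nat.
  lra.
have := F_ge0 w; have := F_ge0 u.
move=> f1 f2 H; case=> h'; lra.
Qed.

Lemma Mval u u' c c' : good u -> good u' -> (0 < c <= m)%N -> (0 < c' <= m)%N ->
  vv u < vv u' -> vv (rcons u c) < vv (rcons u' c').
Proof.
move=> gu gu' /andP[c0 cm] /andP[c0' cm'] H.
have gr : good (rcons u c) by rewrite good_rcons gu c0 cm.
have gr' : good (rcons u' c') by rewrite good_rcons gu' c0' cm'.
case: (ltngtP (size u) (size u')) => h.
- by apply: val_lt_size; rewrite // !size_rcons.
- have := val_lt_size gu' h; lra.
have ne : u != u' by apply/eqP => e; move: H; rewrite e; lra.
have := gap gu gu' h ne.
move: H; rewrite !val_rcons /vv h (invX_S (size u')).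
have ep := invX_gt0 (size u').+1.
set e := 1 / bb ^+ (size u').+1 in ep *.
have hc : c%:R * e < bb * e + c'%:R * e.
  rewrite -mulrDl ltr_pM2r // /bb.
  have : (c%:R : R) <= m%:R by rewrite ler_nat.
  have : (0 : R) <= c'%:R by apply: ler0n.
  lra.
move=> H; case=> h'; lra.
Qed.

Lemma Mval_same u c c' : (c < c')%N -> vv (rcons u c) < vv (rcons u c').
Proof.
move=> h; rewrite !val_rcons.
have : c%:R * (1 / bb ^+ (size u).+1) < c'%:R * (1 / bb ^+ (size u).+1).
  by rewrite ltr_pM2r ?invX_gt0 // ltr_nat.
lra.
Qed.

End Analytic.


Section Xiaddr.
Variable R : realFieldType.
Variable m : nat.
Local Open Scope ring_scope.

Definition G d (acc : R) (a : seq nat) : R :=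
  d%:R + acc + (size a)%:R + F R m a / (bb R m) ^+ d.

Lemma xi_vals_addr t : forall d (acc : R),
  xi_vals (m%:R) d acc t = map (G d acc) (addr t).
Proof.
elim/ptree_ind': t => ts IH d acc.
have -> : addr (Node ts) = auxF addr (size ts) ts 0 by [].
rewrite /=.
set k := size ts; clearbody k.
set two := (2 : R).
move: 0%N; elim: ts IH => [//|u l IHl] [Hu Hl] j /=.
rewrite map_cat /= -map_comp IHl // Hu.
congr (_ :: _ ++ _).
  rewrite /two /G /= F_cons F_nil /bb exprS.
  have h1 := bb_gt0 R m; have h2 := bbX_gt0 R m d.
  rewrite /bb in h1 h2.
  field; by apply/andP; split; rewrite gt_eqF.
apply: eq_map => a /=.
rewrite /two /G /= F_cons /bb exprS.
have h1 := bb_gt0 R m; have h2 := bbX_gt0 R m d.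
rewrite /bb in h1 h2.
rewrite -addn1 natrD.
field; by apply/andP; split; rewrite gt_eqF.
Qed.

End Xiaddr.


Section TreeAn.
Variable R : realFieldType.
Variable T : ptree.
Local Open Scope ring_scope.

Let m := maxdeg T.
Let A := addr T.
Let vl (a : seq nat) : R := vv R m a.
Let S := Xi R T.

Lemma Xi_eq : S = sort <=%R (map vl A).
Proof.
rewrite /S /Xi (@xi_vals_addr R m T 0 0); congr sort.
apply: eq_map => a; rewrite /G /vl /vv expr0 divr1; lra.
Qed.

Lemma goodA a : a \in A -> good m a.
Proof. exact: addr_digits. Qed.

Lemma uniq_vals : uniq (map vl A).
Proof.
rewrite map_inj_in_uniq ?uniq_addr // => a a' ha ha'.
by apply: vv_inj; apply: goodA.
Qed.

Lemma S_sorted : sorted <%R S.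
Proof. by rewrite Xi_eq sort_lt_sorted uniq_vals. Qed.

Lemma size_S : size S = ptsize T.
Proof. by rewrite Xi_eq size_sort size_map size_addr. Qed.

Lemma mem_S x : (x \in S) = (x \in map vl A).
Proof. by rewrite Xi_eq mem_sort. Qed.

Definition lab (a : seq nat) : nat := if a == [::] then 0%N else (index (vl a) S).+1.

Lemma lab_nil : lab [::] = 0%N.
Proof. by []. Qed.

Lemma vl_in a : a \in A -> vl a \in S.
Proof. by move=> h; rewrite mem_S; apply: map_f. Qed.

Lemma lab_A a : a \in A -> [/\ (0 < lab a)%N, (lab a <= ptsize T)%N & xs S (lab a) = vl a].
Proof.
move=> h.
have an : a != [::] by apply: contraTneq h => ->; exact: nil_notin_addr.
rewrite /lab (negbTE an); split => //.
  by rewrite -size_S index_mem vl_in.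
by rewrite /= nth_index // vl_in.
Qed.

Lemma idx_lt x y : x \in S -> y \in S -> (index x S < index y S)%N = (x < y).
Proof.
move=> hx hy; have ss := S_sorted.
apply/idP/idP => h.
  by rewrite -(nth_index 0 hx) -(nth_index 0 hy); apply: nth_ltS => //; rewrite index_mem.
case: (ltnP (index x S) (index y S)) => // h'.
have : nth 0 S (index y S) <= nth 0 S (index x S) by apply: nth_leS; rewrite // index_mem.
by rewrite !nth_index // => h2; move: h; rewrite ltNge h2.
Qed.

Lemma lab_lt a a' : a \in A -> a' \in A -> (lab a < lab a')%N = (vl a < vl a').
Proof.
move=> h h'.
have an : a != [::] by apply: contraTneq h => ->; exact: nil_notin_addr.
have an' : a' != [::] by apply: contraTneq h' => ->; exact: nil_notin_addr.
by rewrite /lab (negbTE an) (negbTE an') ltnS idx_lt ?vl_in.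
Qed.

Lemma lab_onto i : (0 < i <= ptsize T)%N -> exists2 a, a \in A & lab a = i.
Proof.
move=> /andP[i0 iN].
have hin : nth 0 S i.-1 \in S by rewrite mem_nth // size_S; lia.
move: (hin); rewrite mem_S => /mapP[a ha e].
exists a => //.
have an : a != [::] by apply: contraTneq ha => ->; exact: nil_notin_addr.
rewrite /lab (negbTE an) -e index_uniq ?size_S; first lia.
  lia.
by have := S_sorted; rewrite lt_sorted_uniq_le => /andP[].
Qed.

Lemma lab_inj a a' : (a = [::] \/ a \in A) -> (a' = [::] \/ a' \in A) ->
  lab a = lab a' -> a = a'.
Proof.
case=> [->|h]; case=> [->|h'] //.
- by have [h1 _ _] := lab_A h' => e; move: h1; rewrite -e.
- by have [h1 _ _] := lab_A h => e; move: h1; rewrite e.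
move=> e.
case: (eqVneq (vl a) (vl a')) => [ev|nev].
  by apply: vv_inj ev; apply: goodA.
case: (ltgtP (vl a) (vl a')) => [l|l|l]; last by rewrite l eqxx in nev.
  by move: l; rewrite -lab_lt // e ltnn.
by move: l; rewrite -lab_lt // e ltnn.
Qed.

Lemma Kq (u : seq nat) (c : nat) : rcons u c \in A -> parent S (lab (rcons u c)) = lab u.
Proof.
move=> hv.
have [h0 hN hx] := lab_A hv.
have ss := S_sorted.
have iN : (0 < lab (rcons u c) <= size S)%N by rewrite size_S h0 hN.
have [P1 P2 P3] := parent_spec ss iN.
have [hu /andP[c0 _]] := proj1 (mem_addr_rcons T u c) hv.
have gv := goodA hv.
apply/eqP; rewrite eqn_leq; apply/andP; split.
- case: (posnP (parent S (lab (rcons u c)))) => [->//|p0].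
  have pN : (0 < parent S (lab (rcons u c)) <= ptsize T)%N.
    by rewrite p0 /=; lia.
  have [w hw ew] := lab_onto pN.
  move: P1; rewrite /Pr -ew; have [_ _ ->] := lab_A hw; rewrite hx => H.
  have gw := goodA hw.
  have wn : w != [::] by apply: contraTneq hw => ->; exact: nil_notin_addr.
  case: (Kval gv gw wn H) => [->//|lt].
  case: hu => [eu|hu'].
    exfalso; move: lt; rewrite eu /vl /vv F_nil addr0.
    have := val_ge R m w.
    have : (1 : R) <= (size w)%:R by rewrite ler1n lt0n size_eq0.
    rewrite /vv /=; lra.
  by rewrite ltnW // lab_lt.
- apply: P3; first by rewrite size_S; case: hu => [->//|hu']; have [_ ? _] := lab_A hu'.
  case: hu => [eu|hu'].
    have -> : lab u = 0%N by rewrite eu.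
    exact: Pr0 ss iN.
  rewrite /Pr hx; have [_ _ ->] := lab_A hu'.
  exact: val_parent.
Qed.

Lemma rev_iota1 k : rev (iota 1 k) = [seq (k - j)%N | j <- iota 0 k].
Proof.
apply: (@eq_from_nth _ 0%N); first by rewrite size_rev size_map !size_iota.
move=> i; rewrite size_rev size_iota => ik.
rewrite nth_rev ?size_iota // (nth_map 0%N) ?size_iota // !nth_iota //; lia.
Qed.

Lemma filter_children (u : seq nat) : (u = [::] \/ u \in A) ->
  [seq i <- iota 1 (size S) | parent S i == lab u] =
  [seq lab (rcons u c) | c <- iota 1 (deg (subT T u))].
Proof.
move=> hu.
apply: (@irr_sorted_eq _ ltn ltn_trans ltnn).
- apply: sorted_filter; [exact: ltn_trans | exact: iota_ltn_sorted].
- have Hs : {in [pred c | (0 < c <= deg (subT T u))%N] &, {homo (fun c => lab (rcons u c)) : x y / (x < y)%N >-> (x < y)%N}}.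
    move=> c c'; rewrite !inE => h1 h2 cc.
    have r1 : rcons u c \in A by apply/mem_addr_rcons.
    have r2 : rcons u c' \in A by apply/mem_addr_rcons.
    by rewrite lab_lt // Mval_same.
  apply: (homo_sorted_in Hs); last exact: iota_ltn_sorted.
  by apply/allP => c; rewrite mem_iota inE; lia.
move=> i; rewrite mem_filter mem_iota.
apply/idP/idP.
  case/andP => /eqP ep /andP[i1 i2].
  have iN : (0 < i <= ptsize T)%N by rewrite -size_S; lia.
  have [w hw ew] := lab_onto iN.
  have wn : w != [::] by apply: contraTneq hw => ->; exact: nil_notin_addr.
  case/lastP: w hw ew wn => [//|u' c'] hw ew _.
  have := Kq hw; rewrite ew ep => e.
  have [hu' hc'] := proj1 (mem_addr_rcons T u' c') hw.
  have eu := lab_inj hu hu' e; subst u'.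
  by apply/mapP; exists c'; rewrite // mem_iota; lia.
move=> /mapP[c]; rewrite mem_iota => hc ->.
have r : rcons u c \in A by apply/mem_addr_rcons; split => //; lia.
rewrite Kq // eqxx /=.
have [h0 hN _] := lab_A r.
by rewrite size_S; lia.
Qed.

Lemma D_build f (u : seq nat) : (u = [::] \/ u \in A) -> (height (subT T u) < f)%N ->
  build S f (lab u) = subT T u.
Proof.
elim: f u => [//|f IH] u hu hf /=.
rewrite filter_children // -map_rev -map_comp rev_iota1 -map_comp.
case E: (subT T u) hf => [ts] hf.
rewrite /deg /=; congr Node.
rewrite -[RHS](mkseq_nth (Node [::])) /mkseq.
apply/eq_in_map => j; rewrite mem_iota => /andP[_ jk] /=.
have r : rcons u (size ts - j)%N \in A.
  apply/mem_addr_rcons; split => //; rewrite E /deg /=; lia.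
rewrite IH; last first.
  - rewrite subT_rcons E /deg /=.
    apply: leq_trans (height_nth _) _; first lia.
    by rewrite -ltnS.
  - by right.
by rewrite subT_rcons E /deg /=; congr nth; lia.
Qed.

Lemma Lambda_Xi : Lambda S = T.
Proof.
rewrite /Lambda -lab_nil D_build //; first by left.
by rewrite size_S ltnS height_le_size.
Qed.

End TreeAn.


Section Epp.
Variable R : realFieldType.
Variable s : seq R.
Hypothesis ss : sorted <%R s.
Local Open Scope ring_scope.

Let n := size s.
Let p := parent s.
Let T := Lambda s.

Lemma V1 i : (0 < i <= n)%N -> (p i < i)%N.
Proof. by move=> h; have [_ ? _] := parent_spec ss h. Qed.

Lemma V2 i i' : (0 < i)%N -> (i <= i')%N -> (i' <= n)%N -> (p i <= p i')%N.
Proof. by move=> *; apply: parent_mono. Qed.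

Definition Fj (j : nat) := [seq i <- iota 1 n | p i == j].
Definition cp (i : nat) := count (fun i' => p i' == p i) (iota 1 i).

Lemma fuel_build f f' j : (n < f + j)%N -> (n < f' + j)%N -> build s f j = build s f' j.
Proof.
elim: f f' j => [|f IH] f' j h h'.
  case: f' h' => [//|f'] h' /=.
  have -> : [seq i <- iota 1 (size s) | parent s i == j] = [::].
    rewrite (@eq_in_filter _ _ pred0) ?filter_pred0 // => i; rewrite mem_iota => hi.
    apply/negbTE; apply/eqP => e.
    have hv := @V1 i; rewrite /p /n e in hv; lia.
  by [].
case: f' h' => [|f'] h' /=.
  have -> : [seq i <- iota 1 (size s) | parent s i == j] = [::].
    rewrite (@eq_in_filter _ _ pred0) ?filter_pred0 // => i; rewrite mem_iota => hi.
    apply/negbTE; apply/eqP => e.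
    have hv := @V1 i; rewrite /p /n e in hv; lia.
  by [].
congr Node; apply/eq_in_map => i; rewrite mem_rev mem_filter mem_iota => /andP[/eqP e hi].
have hv := @V1 i; rewrite /p /n e in hv.
apply: IH; lia.
Qed.

Fixpoint adf (f i : nat) : seq nat :=
  if f is f'.+1 then (if i is 0 then [::] else rcons (adf f' (p i)) (cp i)) else [::].
Definition ad i := adf i i.

Lemma adf_fuel f f' i : (i <= f)%N -> (i <= f')%N -> (i <= n)%N -> adf f i = adf f' i.
Proof.
elim: f f' i => [|f IH] f' i h h' hn.
  by move: h; rewrite leqn0 => /eqP ->; case: f' h'.
case: i h h' hn => [|i] h h' hn; first by case: f' h'.
case: f' h' => [//|f'] h' /=.
have := @V1 i.+1; rewrite -/p => hv.
by rewrite (IH f') //; lia.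
Qed.

Lemma ad0 : ad 0 = [::].
Proof. by []. Qed.

Lemma adS i : (0 < i <= n)%N -> ad i = rcons (ad (p i)) (cp i).
Proof.
case: i => [//|i] /= hi.
rewrite /ad /=; congr rcons.
have := @V1 i.+1; rewrite -/p => hv.
apply: adf_fuel; lia.
Qed.

Lemma Fj_uniq j : uniq (Fj j).
Proof. by rewrite filter_uniq // iota_uniq. Qed.

Lemma index_F i : (0 < i <= n)%N ->
  [/\ i \in Fj (p i), (0 < cp i)%N & index i (Fj (p i)) = (cp i).-1].
Proof.
move=> /andP[i0 iN].
have e1 : iota 1 n = iota 1 i.-1 ++ i :: iota i.+1 (n - i).
  have h : (i.-1 <= n)%N by lia.
  rewrite -{1}(subnKC h) iotaD.
  have -> : (n - i.-1 = (n - i).+1)%N by lia.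
  have -> : (1 + i.-1 = i)%N by lia.
  by [].
have e2 : iota 1 i = rcons (iota 1 i.-1) i.
  have h : i = (i.-1 + 1)%N by lia.
  rewrite {1}h iotaD -cats1 /=; congr (_ ++ [:: _]); lia.
have nin : i \notin [seq x <- iota 1 i.-1 | p x == p i].
  by rewrite mem_filter mem_iota negb_and; apply/orP; right; lia.
split.
- by rewrite /Fj mem_filter eqxx mem_iota /=; lia.
- by rewrite /cp e2 -cats1 count_cat /= eqxx; lia.
rewrite /Fj e1 filter_cat /= eqxx index_cat (negbTE nin) /= eqxx addn0.
by rewrite /cp e2 -cats1 count_cat /= eqxx size_filter addn0 addn1.
Qed.

Lemma nth_F j c : (0 < c <= size (Fj j))%N ->
  let i := nth 0%N (Fj j) c.-1 in [/\ (0 < i <= n)%N, p i = j & cp i = c].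
Proof.
move=> hc i.
have hin : i \in Fj j.
 by rewrite mem_nth //; case/andP: hc => h1 h2; rewrite prednK.
move: (hin); rewrite mem_filter mem_iota => /andP[/eqP pj hi].
have iN : (0 < i <= n)%N by lia.
split => //.
have [_ c0 ei] := index_F iN.
have hc' : (c.-1 < size (Fj j))%N by case/andP: hc => h1 h2; rewrite prednK.
rewrite pj index_uniq ?Fj_uniq // in ei.
case/andP: hc => h1 h2.
by rewrite -(prednK c0) -(prednK h1) ei.
Qed.

Definition Bd j := build s (n.+1 - j) j.

Lemma deg_Bd j : (j <= n)%N -> deg (Bd j) = size (Fj j) /\
  children (Bd j) = map (build s (n - j)) (rev (Fj j)).
Proof.
move=> jn; rewrite /Bd.
have -> : (n.+1 - j = (n - j).+1)%N by lia.
by rewrite /deg /= size_map size_rev.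
Qed.

Lemma subT_ad i : (i <= n)%N -> subT T (ad i) = Bd i.
Proof.
elim/ltn_ind: i => i IH iN.
case: (posnP i) => [->|i0]; first by rewrite ad0 /Bd subn0.
have hi : (0 < i <= n)%N by rewrite i0.
have hv := V1 hi.
rewrite adS // subT_rcons IH //; last lia.
have [d1 d2] := deg_Bd (ltnW (leq_trans hv iN)).
have [hin c0 ei] := index_F hi.
have csz : (cp i <= size (Fj (p i)))%N.
  by have := index_mem i (Fj (p i)); rewrite hin ei prednK.
rewrite d1 d2 (nth_map 0%N (Node [::])); last by rewrite size_rev; lia.
rewrite nth_rev; last lia.
have -> : (size (Fj (p i)) - (size (Fj (p i)) - cp i).+1 = (cp i).-1)%N by lia.
rewrite -ei nth_index //.
apply: fuel_build; lia.
Qed.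

Lemma ad_in i : (0 < i <= n)%N -> ad i \in addr T.
Proof.
elim/ltn_ind: i => i IH hi.
have hv := V1 hi.
rewrite adS //; apply/mem_addr_rcons; split.
  case: (posnP (p i)) => [->|p0]; first by left.
  right; apply: IH => //; lia.
rewrite subT_ad; last lia.
have [d1 _] := deg_Bd (j := p i) (ltac:(lia)).
have [hin c0 ei] := index_F hi.
rewrite d1 c0 /=.
by have := index_mem i (Fj (p i)); rewrite hin ei prednK.
Qed.

Lemma addr_ad a : a \in addr T -> exists2 i, (0 < i <= n)%N & a = ad i.
Proof.
elim/last_ind: a => [|u c IH]; first by rewrite (negbTE (nil_notin_addr _)).
move/mem_addr_rcons => [hu hc].
have [j jn eu] : exists2 j, (j <= n)%N & u = ad j.
  case: hu => [->|/IH [j hj ->]]; first by exists 0%N.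
  by exists j => //; lia.
move: hc; rewrite eu subT_ad // => hc.
have [d1 _] := deg_Bd jn.
rewrite d1 in hc.
have [h1 h2 h3] := nth_F hc.
exists (nth 0%N (Fj j) c.-1) => //.
by rewrite [in RHS]adS // h2 h3.
Qed.

Let m := maxdeg T.
Let vl (a : seq nat) : R := vv R m a.

Lemma good_ad i : (i <= n)%N -> good m (ad i).
Proof.
case: (posnP i) => [->//|i0] iN.
by apply: goodA; apply: ad_in; rewrite i0.
Qed.

Lemma cp_lt i i' : (0 < i)%N -> (i < i')%N -> (i' <= n)%N -> p i = p i' -> (cp i < cp i')%N.
Proof.
move=> i0 ii iN e.
rewrite /cp e.
have -> : iota 1 i' = iota 1 i ++ iota (1 + i) (i' - i).
  by rewrite -iotaD subnKC // ltnW.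
rewrite count_cat -[X in (X < _)%N]addn0 ltn_add2l -has_count.
apply/hasP; exists i'; last by rewrite eqxx.
rewrite mem_iota; lia.
Qed.

Lemma vl_nil : vl [::] = 0.
Proof. by rewrite /vl /vv F_nil /= addr0. Qed.

Lemma ad_mono i i' : (i < i')%N -> (i' <= n)%N -> vl (ad i) < vl (ad i').
Proof.
elim/ltn_ind: i' i => i' IH i ii iN.
have i'0 : (0 < i' <= n)%N by rewrite iN andbT; lia.
case: (posnP i) => [->|i0].
  rewrite ad0 vl_nil.
  have hin := ad_in i'0.
  have ne : ad i' != [::] by apply: contraTneq hin => ->; exact: nil_notin_addr.
  have := val_ge R m (ad i').
  have : (1 : R) <= (size (ad i'))%:R by rewrite ler1n lt0n size_eq0.
  rewrite /vl; lra.
have hi : (0 < i <= n)%N by rewrite i0 /=; lia.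
have g := good_ad (ltnW (leq_ltn_trans (leqnn i) (leq_trans ii iN))).
have g' := good_ad iN.
rewrite (adS hi) (adS i'0).
rewrite (adS hi) good_rcons in g; rewrite (adS i'0) good_rcons in g'.
case/andP: g => gu gc; case/andP: g' => gu' gc'.
have pm := V2 i0 (ltnW ii) iN.
case: (ltngtP (p i) (p i')) pm => // [lt|eq] _.
  apply: Mval => //.
  have hv' := V1 i'0; apply: IH => //; lia.
rewrite eq; apply: Mval_same; exact: cp_lt.
Qed.

Lemma ad_inj : {in iota 1 n &, injective ad}.
Proof.
move=> i i'; rewrite !mem_iota => hi hi' e.
case: (ltngtP i i') => // h.
  by have := ad_mono h (ltac:(lia)); rewrite e ltxx.
by have := ad_mono h (ltac:(lia)); rewrite e ltxx.
Qed.

Lemma perm_ad : perm_eq (addr T) (map ad (iota 1 n)).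
Proof.
apply: uniq_perm; first exact: uniq_addr.
  by rewrite map_inj_in_uniq ?iota_uniq //; exact: ad_inj.
move=> a; apply/idP/idP.
  move/addr_ad => [i hi ->]; apply: map_f; rewrite mem_iota; lia.
move/mapP => [i]; rewrite mem_iota => hi ->; apply: ad_in; lia.
Qed.

Lemma size_T : ptsize T = n.
Proof. by rewrite -size_addr (perm_size perm_ad) size_map size_iota. Qed.

Lemma sorted_vad : sorted <%R [seq vl (ad i) | i <- iota 1 n].
Proof.
apply: (@homo_sorted_in _ _ [pred i | (i <= n)%N] _ ltn); last exact: iota_ltn_sorted.
  by move=> x y _; rewrite inE => yn xy; apply: ad_mono.
by apply/allP => x; rewrite mem_iota inE; lia.
Qed.

Lemma Xi_T : Xi R T = [seq vl (ad i) | i <- iota 1 n].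
Proof.
rewrite Xi_eq.
have pe := perm_map vl perm_ad.
rewrite (perm_sortP le_total le_trans le_anti _ _ pe) -map_comp.
apply: sorted_sort; first exact: le_trans.
by have := sorted_vad; rewrite lt_sorted_uniq_le => /andP[].
Qed.

Lemma lab_ad i : (0 < i <= n)%N -> lab R T (ad i) = i.
Proof.
move=> hi.
have hin := ad_in hi.
have ne : ad i != [::] by apply: contraTneq hin => ->; exact: nil_notin_addr.
rewrite /lab (negbTE ne) Xi_T.
have -> : vv R (maxdeg T) (ad i) = nth 0 [seq vl (ad i) | i <- iota 1 n] i.-1.
  rewrite (nth_map 0%N) ?size_iota; last lia.
  by rewrite nth_iota; [congr (vl (ad _)); lia | lia].
rewrite index_uniq ?size_map ?size_iota; first lia.
  lia.
by have := sorted_vad; rewrite lt_sorted_uniq_le => /andP[].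
Qed.

Lemma E2 i : (0 < i <= n)%N -> parent (Xi R T) i = p i.
Proof.
move=> hi.
have hin := ad_in hi.
rewrite -{1}(lab_ad hi) (adS hi) Kq; last by rewrite -adS.
case: (posnP (p i)) => [->|p0]; first by rewrite ad0.
apply: lab_ad; have := V1 hi; lia.
Qed.

End Epp.


Theorem mainTheorem2 (R : realType) (n : nat) : (0 < n)%N ->
  (forall s : seq R, starting n s -> ptsize (Lambda s) = n) /\
  (forall s s' : seq R, starting n s -> starting n s' ->
     uip_iso n s s' -> Lambda s = Lambda s') /\
  (forall s s' : seq R, starting n s -> starting n s' ->
     Lambda s = Lambda s' -> uip_iso n s s') /\
  (forall T : ptree, ptsize T = n ->
     starting n (Xi R T) /\ Lambda (Xi R T) = T) /\
  (forall s : seq R, starting n s -> uip_iso n (Xi R (Lambda s)) s).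
Proof.
move=> _.
have P1 : forall s : seq R, starting n s -> ptsize (Lambda s) = n.
  by move=> s [sz ss]; rewrite size_T // sz.
have P4 : forall T : ptree, ptsize T = n -> starting n (Xi R T) /\ Lambda (Xi R T) = T.
  move=> T hT; split; last exact: Lambda_Xi.
  by split; [rewrite size_S | exact: S_sorted].
split => //.
split.
  move=> s s' st st' iso.
  have E := parent_ext st st' (iso_L st st' iso).
  case: st st' E => [sz ss] [sz' ss'] E.
  rewrite /Lambda sz sz'; apply: build_ext; first by rewrite sz sz'.
  by rewrite sz; exact: E.
split.
  move=> s s' st st' e.
  apply: iso_of_parent => // i hi.
  case: st st' => [sz ss] [sz' ss'].
  rewrite -(E2 ss) ?sz // -(E2 ss') ?sz' //.
  by rewrite e.
split => //.
move=> s st.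
have [st1 _] := P4 _ (P1 s st).
apply: iso_of_parent => // i hi.
case: st => [sz ss].
by rewrite (E2 ss) // sz.
Qed.
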